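(* Let $x,\tilde x\in(-\infty,0)$ and $y\in(x,0)$, and set $\Delta\vartheta=p_{0,-\infty}(\tilde x)-p_{0,-\infty}(x)$. Then $$p_{\tilde x,0}\Big(p_{\tilde x,1}^{-1}\big(p_{x,1}(y)+\Delta\vartheta\big)\Big)-p_{x,0}(y)=p_{1,-\infty}(\tilde x)-p_{1,-\infty}(x).$$
   Context: For real $p\neq q$ and $w$ strictly between $p$ and $q$ (oriented interval $(p,q)$, $p>q$ allowed), $p_{p,q}(w)=\ln\frac{w-p}{q-w}$, a bijection onto $\mathbb{R}$ with inverse $p_{p,q}^{-1}$; also $p_{p,-\infty}(w)=\ln|w-p|$ for $w<p$. *)

(* Defs.v *)
From Stdlib Require Import Reals.
Open Scope R_scope.

(* p_{p,q}(w) = ln((w-p)/(q-w)), for w strictly between p and q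
   (oriented interval, p > q allowed). *)
Definition pcoord (p q w : R) : R := ln ((w - p) / (q - w)).

(* The inverse p_{p,q}^{-1} : R -> (p,q), obtained by solving
   (w-p)/(q-w) = exp t, i.e. w = (p + exp t * q) / (1 + exp t). *)
Definition pcoord_inv (p q t : R) : R := (p + exp t * q) / (1 + exp t).

Definition pcoord_minf (p w : R) : R := ln (Rabs (w - p)).

(* Main.v *)
Require Import Defs.
From Stdlib Require Import Reals Lra.
Open Scope R_scope.

Theorem proposition2p3 (x xt y : R) :
  x < 0 -> xt < 0 -> x < y -> y < 0 ->
  let dtheta := pcoord_minf 0 xt - pcoord_minf 0 x in
  pcoord xt 0 (pcoord_inv xt 1 (pcoord x 1 y + dtheta)) - pcoord x 0 y
  = pcoord_minf 1 xt - pcoord_minf 1 x.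
Proof.
  intros Hx Hxt Hxy Hy dtheta. unfold dtheta, pcoord, pcoord_inv, pcoord_minf.
  rewrite !Rminus_0_r, !Rabs_left by lra.

  set (a := (y - x) / (1 - y)).
  assert (Ha : 0 < a) by (unfold a; apply Rdiv_lt_0_compat; lra).
  assert (HE : exp (ln a + (ln (- xt) - ln (- x))) = a * (- xt) / (- x)).
  { unfold Rminus. rewrite !exp_plus, exp_Ropp, !exp_ln by lra. unfold Rdiv. ring. }
  rewrite HE. set (E := a * - xt / - x).
  assert (HEp : 0 < E) by (unfold E; apply Rdiv_lt_0_compat; [apply Rmult_lt_0_compat|]; lra).
  assert (Hr : ((xt + E * 1) / (1 + E) - xt) / (0 - (xt + E * 1) / (1 + E))
             = ((y - x) / (0 - y)) * ((1 - xt) / (1 - x))).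
  { unfold E, a. field. repeat split; try lra.
    - assert (0 < (1 - y) * - x) by (apply Rmult_lt_0_compat; lra).
      assert (0 < (y - x) * - xt) by (apply Rmult_lt_0_compat; lra). lra.
    - replace (xt * ((1 - y) * - x) + (y - x) * - xt) with (xt * y * (x - 1)) by ring.
      assert (0 < xt * y) by nra. assert (0 < xt * y * (1 - x)) by nra. nra. }
  rewrite Hr. rewrite ln_mult.
  - unfold Rdiv at 2. rewrite ln_mult, ln_Rinv by (try apply Rinv_0_lt_compat; lra). replace (- (xt - 1)) with (1 - xt) by ring.
    replace (- (x - 1)) with (1 - x) by ring. ring.
  - apply Rdiv_lt_0_compat; lra.
  - apply Rdiv_lt_0_compat; lra.
Qed.
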